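(* Let $d$ be a positive integer and let $\{\mathcal{F}^{(n)}\}_{n\in\mathbb{N}}$ be a sequence of degree-$d$ factors, all with the same dimension vector $(M_1,\dots,M_d)$. Then there exists a fully regular sequence $\{\mathcal{H}^{(n)}\}_{n\in\mathbb{N}}$ of degree-$d$ factors that is a refinement of $\{\mathcal{F}^{(n)}\}$.
   Context: A degree-$d$ factor is a tuple $(P_1,\dots,P_K)$ of polynomials $\mathbb{F}_2^{m}\to\mathbb{F}_2$ (for some $m$, which may depend on $n$ in a sequence) of degree at most $d$; its dimension vector is $(M_1,\dots,M_d)$ where $M_\ell$ is the number of $P_i$ of degree exactly $\ell$, and $K=\sum_\ell M_\ell$. For $P$ not identically zero and $\ell\ge1$, $\operatorname{rank}_{\ell}(P)$ is the smallest positive integer $k$ with $P=\Gamma(Q_1,\dots,Q_k)$ for polynomials $Q_j$ of degree at most $\ell$ and some $\Gamma\colon\mathbb{F}_2^k\to\mathbb{F}_2$. A factor is $r$-regular if every nonzero linear combination $\sum_i\lambda_iP_i$ has $\operatorname{rank}_{\ell-1}>r$, where $\ell=\max_i\deg(\lambda_iP_i)$. A sequence of factors $\{\mathcal{F}^{(n)}\}$ is $r$-regular if there is $N_0$ such that $\mathcal{F}^{(n)}$ is $r$-regular for all $n\ge N_0$, and fully regular if it is $r$-regular for every $r\in\mathbb{N}$. In a sequence of factors, all factors have the same degree bound and the same dimension vector. A sequence $\{\mathcal{G}^{(n)}\}$ (of dimension $L$) refines $\{\mathcal{F}^{(n)}\}$ (of dimension $K$) if there are a strictly increasing $g\colon\mathbb{N}\to\mathbb{N}$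 and a single $\Gamma\colon\mathbb{F}_2^L\to\mathbb{F}_2^K$ such that $\Gamma(\mathcal{G}^{(n)})=\mathcal{F}^{(g(n))}$ as functions for all $n$. *)

(* Defs.v *)
(* F_2 is modelled by bool (addition = xor = addb). *)
From mathcomp Require Import all_boot.
Set Implicit Arguments. Unset Strict Implicit. Unset Printing Implicit Defensive.

Definition pt (m : nat) := {ffun 'I_m -> bool}.
(* functions F_2^m -> F_2 (every such function is a polynomial) *)
Definition fn (m : nat) := pt m -> bool.

(* coefficient of the monomial prod_{i in S} x_i in the algebraic normal form
   (unique multilinear representation) of f: Moebius inversion. *)
Definition anf_coef (m : nat) (f : fn m) (S : {set 'I_m}) : bool :=
  \big[addb/false]_(x : pt m | [set i | x i] \subset S) f x.

(* degree of f: largest size of a monomial in its ANF (0 for constants) *)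
Definition deg (m : nat) (f : fn m) : nat :=
  \max_(S : {set 'I_m} | anf_coef f S) #|S|.

Definition factor (m K : nat) := 'I_K -> fn m.

Definition dimv (m K : nat) (F : factor m K) (l : nat) : nat :=
  #|[set i : 'I_K | deg (F i) == l]|.

Definition has_dimvec (d m K : nat) (F : factor m K) (M : nat -> nat) : Prop :=
  (forall i, deg (F i) <= d) /\
  (forall l, 1 <= l <= d -> dimv F l = M l) /\
  K = \sum_(1 <= l < d.+1) M l.

Definition factor_seq (d K : nat) (m : nat -> nat)
  (F : forall n, factor (m n) K) : Prop :=
  exists M : nat -> nat, forall n, has_dimvec d (F n) M.

Definition rank_le (m : nat) (l : nat) (P : fn m) (r : nat) : Prop :=
  exists k, 0 < k <= r /\
  exists Q : 'I_k -> fn m, (forall j, deg (Q j) <= l) /\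
  exists Gamma : {ffun 'I_k -> bool} -> bool,
    forall x, P x = Gamma [ffun j => Q j x].

Definition lincomb (m K : nat) (F : factor m K) (lam : {ffun 'I_K -> bool})
  : fn m := fun x => \big[addb/false]_(i | lam i) F i x.

Definition lindeg (m K : nat) (F : factor m K) (lam : {ffun 'I_K -> bool}) : nat :=
  \max_(i | lam i) deg (F i).

Definition regular (r m K : nat) (F : factor m K) : Prop :=
  forall lam : {ffun 'I_K -> bool}, (exists i, lam i) ->
    ~ rank_le (lindeg F lam).-1 (lincomb F lam) r.

Definition seq_regular (r K : nat) (m : nat -> nat)
  (F : forall n, factor (m n) K) : Prop :=
  exists N0, forall n, N0 <= n -> regular r (F n).

Definition fully_regular (K : nat) (m : nat -> nat)
  (F : forall n, factor (m n) K) : Prop :=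
  forall r, seq_regular r F.

(* Main.v *)
Require Import Defs.
From mathcomp Require Import all_boot.
From Stdlib Require Import Classical ClassicalEpsilon.
Set Implicit Arguments. Unset Strict Implicit. Unset Printing Implicit Defensive.

Lemma iter_addb (b : bool) n : iter n (addb b) false = b && odd n.
Proof. by elim: n => [|n /= ->]; [rewrite andbF|case: b; case: (odd n)]. Qed.

Lemma sum_const_addb (T : finType) (P : pred T) c :
  \big[addb/false]_(i | P i) c = c && odd #|P|.
Proof. by rewrite big_const iter_addb. Qed.

Lemma deg_zero m : deg (fun _ : pt m => false) = 0.
Proof.
rewrite /deg big1 // => S; rewrite /anf_coef big1 //.
Qed.

Definition supp m (x : pt m) : {set 'I_m} := [set i | x i].

Lemma supp_inj m : injective (@supp m).
Proof.
move=> x y E; apply/ffunP => i.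
by have := congr1 (fun S : {set 'I_m} => i \in S) E; rewrite /supp !inE.
Qed.

Lemma card_subsupp m (A : {set 'I_m}) :
  #|[pred y : pt m | supp y \subset A]| = 2 ^ #|A|.
Proof.
rewrite -card_powerset.
have -> : powerset A = (@supp m) @: [set y : pt m | supp y \subset A].
  apply/setP => S; rewrite inE; apply/idP/imsetP.
    move=> SA; exists [ffun i => i \in S]; last first.
      by apply/setP => i; rewrite /supp inE ffunE.
    rewrite inE; have -> : supp [ffun i => i \in S] = S.
      by apply/setP => i; rewrite /supp inE ffunE.
    done.
  by case=> y; rewrite inE => H ->.
rewrite card_imset; last exact: supp_inj.
by apply: eq_card => y; rewrite inE.
Qed.

Lemma deg0_const m (f : fn m) : deg f = 0 -> forall x, f x = f [ffun => false].
Proof.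
move=> D0.
have coef0 : forall S : {set 'I_m}, 0 < #|S| -> anf_coef f S = false.
  move=> S HS; apply/negbTE/negP => HC.
  have : #|S| <= deg f by rewrite /deg; apply: (leq_bigmax_cond S HC).
  by rewrite D0 leqn0 => /eqP E; rewrite E in HS.
suff H : forall n x, #|supp x| <= n -> f x = f [ffun => false].
  by move=> x; apply: (H _ x (leqnn _)).
elim=> [|n IH] x Hx.
  have -> : x = [ffun => false] => //.
  apply/ffunP => i; rewrite ffunE; apply/negbTE/negP => xi.
  have : i \in supp x by rewrite /supp inE.
  by move: Hx; rewrite leqn0 cards_eq0 => /eqP ->; rewrite inE.
have [E|NE] := eqVneq #|supp x| 0.
  by apply: (IH x); rewrite E.
have := coef0 (supp x); rewrite lt0n NE => /(_ isT).
rewrite /anf_coef (bigD1 x) /=; last by rewrite subxx.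
have Hr : \big[addb/false]_(i : pt m | ([set i0 | i i0] \subset supp x) && (i != x)) f i =
     \big[addb/false]_(i : pt m | ([set i0 | i i0] \subset supp x) && (i != x)) f [ffun => false].
  apply: eq_bigr => y /andP [Hs Hne].
  apply: (IH y).
  have Hp : supp y \proper supp x.
    rewrite properEneq Hs andbT; apply/negP => /eqP E.
    by move/negP: Hne; apply; apply/eqP; apply: supp_inj.
  by have := proper_card Hp => H; rewrite -ltnS; apply: leq_trans H Hx.
rewrite Hr sum_const_addb.
match goal with |- context [#|?Q|] => set P := Q end.
have -> : #|P| = (2 ^ #|supp x|).-1.
  rewrite -(card_subsupp (supp x)) (cardD1 x [pred y : pt m | supp y \subset supp x]).
  rewrite [x \in _]unfold_in /= subxx /= add0n.
  by apply: eq_card => y; rewrite !inE /= andbC.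
have -> : odd (2 ^ #|supp x|).-1 = true.
  rewrite -subn1 oddB ?expn_gt0 // oddX /=.
  by case: (#|supp x|) NE.
by rewrite andbT; case: (f x); case: (f _).
Qed.

Lemma inf_pigeon (T : finType) (R : nat -> T -> Prop) :
  (forall N, exists n, N <= n /\ exists t, R n t) ->
  exists t, forall N, exists n, N <= n /\ R n t.
Proof.
move=> H.
suff S : forall k (A : {set T}), #|A| <= k ->
   (forall N, exists n, N <= n /\ exists t, t \in A /\ R n t) ->
   exists t, forall N, exists n, N <= n /\ R n t.
  apply: (S _ setT (leqnn _)) => N; have [n [Hn [t Ht]]] := H N.
  by exists n; split => //; exists t; rewrite inE.
elim=> [|k IH] A HA HI.
  move: HA; rewrite leqn0 cards_eq0 => /eqP A0.
  by have [n [_ [t]]] := HI 0; rewrite A0 inE => -[].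
have [A0|[t0 t0A]] := set_0Vmem A.
  by have [n [_ [t]]] := HI 0; rewrite A0 inE => -[].
case: (classic (forall N, exists n, N <= n /\ R n t0)) => [H0|H0]; first by exists t0.
have [N0 HN0] : exists N0, forall n, N0 <= n -> ~ R n t0.
  apply: NNPP => C; apply: H0 => N; apply: NNPP => C2; apply: C; exists N => n Hn Rn.
  by apply: C2; exists n.
apply: (IH (A :\ t0)).
  by move: HA; rewrite (cardsD1 t0 A) t0A.
move=> N; have [n [Hn [t [tA Rt]]]] := HI (maxn N N0).
exists n; split; first by apply: leq_trans Hn; apply: leq_maxl.
exists t; split => //; rewrite !inE tA andbT; apply/eqP => E; subst t.
by apply: (HN0 n) => //; apply: leq_trans Hn; apply: leq_maxr.
Qed.

Lemma extract (R : nat -> Prop) :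
  (forall N, exists n, N <= n /\ R n) ->
  exists g : nat -> nat, (forall k, g k < g k.+1) /\ forall k, R (g k).
Proof.
move=> H.
pose c N := constructive_indefinite_description _ (H N).
pose g := fix g k := match k with 0 => proj1_sig (c 0) | k'.+1 => proj1_sig (c (g k').+1) end.
exists g; split.
  by move=> k /=; case: (proj2_sig (c (g k).+1)).
by case=> [|k] /=; [case: (proj2_sig (c 0)) | case: (proj2_sig (c (g k).+1))].
Qed.

Fixpoint lexlt (s t : seq nat) : Prop :=
  match s, t with
  | a :: s', b :: t' => a < b \/ (a = b /\ lexlt s' t')
  | _, _ => False
  end.
Definition Rlex (s t : seq nat) := size s = size t /\ lexlt s t.
Lemma Rlex_wf : well_founded Rlex.
Proof.
suff S : forall n s, size s = n -> Acc Rlex s.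
  move=> s; exact: (S _ s erefl).
elim=> [|n IHn] s.
  case: s => [_|]; last by [].
  constructor => y [_]; case: y => [|? ?] /= H; case: H.
case: s => [|a s'] Hs'; first by [].
move: Hs' => /= /eqP; rewrite eqSS => /eqP Hs'.
suff S : forall A a, a <= A -> forall s', size s' = n -> Acc Rlex (a :: s').
  exact: (S a a (leqnn a) s' Hs').
clear a s' Hs'.
elim=> [|A IHA] a Ha s' Hs'.
- move: Ha; rewrite leqn0 => /eqP ->.
  have acc := IHn s' Hs'; elim: acc Hs' => {}s' _ IHs' Hs'.
  constructor => -[|b t] [Hsz] /= H; first case: H.
  case: H => [H|[Eb Hlt]]; first by [].
  rewrite Eb; apply: IHs'; first by split; [case: Hsz| exact: Hlt].
  by case: Hsz => ->.
- have acc := IHn s' Hs'; elim: acc Hs' => {}s' _ IHs' Hs'.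
  constructor => -[|b t] [Hsz] /= H; first case: H.
  case: H => [Hb|[Eb Hlt]].
    apply: IHA; first by rewrite -ltnS; apply: leq_trans Hb Ha.
    by case: Hsz => ->.
  rewrite Eb; apply: IHs'; first by split; [case: Hsz| exact: Hlt].
  by case: Hsz => ->.
Qed.

Fixpoint desc (d : nat) : seq nat := if d is d'.+1 then d'.+1 :: desc d' else [::].

Lemma size_desc d : size (desc d) = d.
Proof. by elim: d => //= d ->. Qed.

Lemma lex_desc (f g : nat -> nat) d l : 0 < l <= d ->
  (forall l', l < l' <= d -> f l' = g l') -> f l < g l ->
  lexlt (map f (desc d)) (map g (desc d)).
Proof.
elim: d => [|d IH] /andP [l0 ld] Heq Hlt.
  by move: ld; rewrite leqn0 => /eqP E; rewrite E in l0.
rewrite /=.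
have [E|NE] := eqVneq l d.+1; first by left; rewrite -E.
right; split.
  by apply: Heq; rewrite leqnn andbT ltn_neqAle NE ld.
apply: IH => //.
  by rewrite l0 /= -ltnS ltn_neqAle NE ld.
by move=> l' /andP [H1 H2]; apply: Heq; rewrite H1 /= (leq_trans H2).
Qed.

Definition lincombI (I : finType) m (F : I -> fn m) (lam : {ffun I -> bool}) : fn m :=
  fun x => \big[addb/false]_(i | lam i) F i x.
Definition lindegI (I : finType) m (F : I -> fn m) (lam : {ffun I -> bool}) : nat :=
  \max_(i | lam i) deg (F i).
Definition regularI (I : finType) r m (F : I -> fn m) : Prop :=
  forall lam : {ffun I -> bool}, (exists i, lam i) ->
    ~ rank_le (lindegI F lam).-1 (lincombI F lam) r.
Definition fully_regularI (I : finType) (m : nat -> nat) (F : forall n, I -> fn (m n)) : Prop :=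
  forall r, exists N0, forall n, N0 <= n -> regularI r (F n).

Lemma fully_regularI_eq L m (H : forall n, factor (m n) L) :
  fully_regularI H -> fully_regular H.
Proof. by []. Qed.

Lemma rank_le_ext m l (P P' : fn m) r :
  (forall x, P x = P' x) -> rank_le l P r -> rank_le l P' r.
Proof.
move=> E [k [Hk [Q [HQ [G HG]]]]]; exists k; split => //; exists Q; split => //.
by exists G => x; rewrite -E.
Qed.

Lemma regular_reindex (I J : finType) (h : J -> I) (h' : I -> J) :
  cancel h h' -> cancel h' h -> forall r m (F : I -> fn m),
  regularI r F -> regularI r (fun j => F (h j)).
Proof.
move=> hK h'K r m F R lam [j lj].
pose lam' := [ffun i => lam (h' i)].
have bij : {on [pred i | lam' i], bijective h}.
  by apply: onW_bij; exists h'.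
have E1 : forall x, lincombI (fun j => F (h j)) lam x = lincombI F lam' x.
  move=> x; rewrite /lincombI [RHS](reindex h bij) /=.
  by apply: eq_bigl => y; rewrite ffunE hK.
have E2 : lindegI (fun j => F (h j)) lam = lindegI F lam'.
  rewrite /lindegI [RHS](reindex h bij) /=.
  by apply: eq_bigl => y; rewrite ffunE hK.
move=> Hr; apply: (R lam'); first by exists (h j); rewrite ffunE hK.
by rewrite -E2; apply: rank_le_ext Hr.
Qed.

Lemma rank_le_norm m l (P : fn m) r : rank_le l P r ->
  exists (Q : 'I_r -> fn m) (G : {ffun {ffun 'I_r -> bool} -> bool}),
    (forall j, deg (Q j) <= l) /\ forall x, P x = G [ffun j => Q j x].
Proof.
case=> k [/andP [k0 kr] [Q [HQ [G HG]]]].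
pose Q' (j : 'I_r) : fn m := if insub (val j) is Some j' then Q j' else (fun _ => false).
exists Q', [ffun y : {ffun 'I_r -> bool} => G [ffun j : 'I_k => y (widen_ord kr j)]]; split.
  move=> j; rewrite /Q'; case: insubP => [j' _ _|_]; first exact: HQ.
  by rewrite deg_zero.
move=> x; rewrite HG ffunE; congr G; apply/ffunP => j; rewrite !ffunE /Q' /=.
case: insubP => [j' _ E|]; last by rewrite /= ltn_ord.
by congr (Q _ x); apply: val_inj; rewrite E.
Qed.

Lemma card_set_sum (I : finType) (P : pred I) : #|[set i | P i]| = \sum_i (P i : nat).
Proof. by rewrite -sum1dep_card big_mkcond. Qed.

Lemma count_levels (I : finType) (D : I -> nat) d :
  \sum_(1 <= l < d.+1) \sum_i (D i == l : nat) = \sum_i (0 < D i <= d : nat).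
Proof.
rewrite exchange_big /=; apply: eq_bigr => i _.
elim: d => [|d IH]; first by rewrite big_geq //; case: (D i) => [|[]].
rewrite big_nat_recr //= IH.
have [E|NE] := eqVneq (D i) d.+1; first by rewrite E ltnn andbF leqnn.
by rewrite addn0 (leq_eqVlt (D i) d.+1) (negbTE NE).
Qed.

Section Core.
Variable d : nat.

Definition cnt (I : finType) (D : I -> nat) (l : nat) : nat := \sum_i (D i == l : nat).
Definition meas (I : finType) (D : I -> nat) : seq nat := map (cnt D) (desc d).

Definition Concl (I : finType) (m : nat -> nat) (F : forall n, I -> fn (m n)) : Prop :=
  exists (L : nat) (D' : 'I_L -> nat) (g : nat -> nat) (H : forall n, factor (m (g n)) L)
         (Gamma : {ffun 'I_L -> bool} -> {ffun I -> bool}),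
    (forall j, 0 < D' j <= d) /\ (forall n j, deg (H n j) = D' j) /\
    fully_regular H /\ (forall n, g n < g n.+1) /\
    (forall n (x : pt (m (g n))), Gamma [ffun j => H n j x] = [ffun i => F (g n) i x]).

Lemma core_base (I : finType) (D : I -> nat) (m : nat -> nat) (F : forall n, I -> fn (m n)) :
  (forall i, 0 < D i <= d) -> (forall n i, deg (F n i) = D i) ->
  fully_regularI F -> Concl F.
Proof.
move=> HD HF FR.
exists #|I|, (fun j => D (enum_val j)), (fun n => n), (fun n j => F n (enum_val j)),
  (fun y => [ffun i => y (enum_rank i)]).
split; first by move=> j; apply: HD.
split; first by move=> n j; apply: HF.
split.
  apply: fully_regularI_eq => r; have [N0 HN] := FR r; exists N0 => n Hn.
  apply: (regular_reindex (@enum_valK I) (@enum_rankK I)); exact: HN.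
split; first by [].
by move=> n x; apply/ffunP => i; rewrite !ffunE enum_rankK.
Qed.

Lemma core : forall mu (I : finType) (D : I -> nat) (m : nat -> nat)
  (F : forall n, I -> fn (m n)),
  mu = meas D -> (forall i, 0 < D i <= d) -> (forall n i, deg (F n i) = D i) -> Concl F.
Proof.
move=> mu; elim: (Rlex_wf mu) => {}mu _ IH I D m F Emu HD HF.
case: (classic (fully_regularI F)) => [FR|NFR]; first exact: core_base.
have [r Hr] : exists r, forall N0, exists n, N0 <= n /\ ~ regularI r (F n).
  apply: NNPP => C; apply: NFR => r; apply: NNPP => C2; apply: C; exists r => N0.
  apply: NNPP => C3; apply: C2; exists N0 => n Hn; apply: NNPP => C4; apply: C3.
  by exists n.
pose T := ({ffun I -> bool} * {ffun {ffun 'I_r -> bool} -> bool} *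
           ({ffun 'I_r -> 'I_d.+1} * {ffun 'I_r -> bool}))%type.
pose Spec n (t : T) (Q : 'I_r -> fn (m n)) : Prop :=
  [/\ (exists i, t.1.1 i), (forall j, deg (Q j) = t.2.1 j),
      (forall j, (t.2.1 j : nat) <= (\max_(i | t.1.1 i) D i).-1),
      (forall x, lincombI (F n) t.1.1 x = t.1.2 [ffun j => Q j x]) &
      (forall j, t.2.2 j = Q j [ffun => false])].
have Hinf : forall N, exists n, N <= n /\ exists t : T, exists Q, Spec n t Q.
  move=> N; have [n [Hn NR]] := Hr N; exists n; split => //.
  have [lam [Hlam Hrk]] : exists lam : {ffun I -> bool}, (exists i, lam i) /\
       rank_le (lindegI (F n) lam).-1 (lincombI (F n) lam) r.
    apply: NNPP => C; apply: NR => lam Hlam Hrk; by apply: C; exists lam.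
  have Eld : lindegI (F n) lam = \max_(i | lam i) D i.
    by apply: eq_bigr => i _; apply: HF.
  have [Q [G [HQ HG]]] := rank_le_norm Hrk.
  have Hmax : \max_(i | lam i) D i <= d.
    by apply/bigmax_leqP => i _; case/andP: (HD i).
  have Hdq : forall j, deg (Q j) <= d.
    by move=> j; apply: leq_trans (HQ j) _; rewrite Eld; apply: leq_trans (leq_pred _) Hmax.
  exists (lam, G, ([ffun j => (inord (deg (Q j)) : 'I_d.+1)], [ffun j => Q j [ffun => false]])), Q.
  split => //=.
  - by move=> j; rewrite ffunE inordK // ltnS.
  - by move=> j; rewrite ffunE inordK ?ltnS // -Eld.
  - by move=> j; rewrite ffunE.
have [t Ht] := inf_pigeon Hinf.
have [g [Hg HgR]] := extract Ht.
pose QS := fun k => constructive_indefinite_description _ (HgR k).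
pose Qk k := proj1_sig (QS k).
have HQk : forall k, Spec (g k) t (Qk k) := fun k => proj2_sig (QS k).
pose lam := t.1.1; pose G0 := t.1.2; pose e := t.2.1; pose c := t.2.2.
have [[i1 Hi1] _ _ _ _] := HQk 0.
have Apos : 0 < #|[pred i | lam i]| by apply/card_gt0P; exists i1.
have [i0 Hi0 Emax] := eq_bigmax_cond D Apos.
have Emax' : \max_(i | lam i) D i = D i0 by rewrite -Emax; apply: eq_bigl => i.
have lami0 : lam i0 by [].
have [Dl0 Dld] : 0 < D i0 /\ D i0 <= d by apply/andP; apply: HD.
have He : forall j, (e j : nat) <= (D i0).-1.
  by move=> j; have [_ _ H _ _] := HQk 0; rewrite -Emax'; apply: H.
pose I' := {i : I | i != i0}.
pose J' := {j : 'I_r | 0 < (e j : nat)}.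
pose I1 := (I' + J')%type.
pose D1 (u : I1) : nat := match u with inl i => D (val i) | inr j => e (val j) end.
pose m1 := fun k => m (g k).
pose G (k : nat) (u : I1) : fn (m1 k) :=
  match u with inl i => F (g k) (val i) | inr j => Qk k (val j) end.
have HD1 : forall u, 0 < D1 u <= d.
  case=> [i|j] /=; first exact: HD.
  rewrite (valP j) /=; apply: leq_trans (He (val j)) _.
  by apply: leq_trans (leq_pred _) Dld.
have HG1 : forall k u, deg (G k u) = D1 u.
  move=> k [i|j] /=; first exact: HF.
  by have [_ H _ _ _] := HQk k; apply: H.
have Hcnt : forall l, D i0 <= l -> cnt D l = (D i0 == l) + cnt D1 l.
  move=> l Hl; rewrite /cnt big_sumType /=.
  have -> : \sum_(j : J') ((e (val j) : nat) == l : nat) = 0.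
    apply: big1 => j _; case: eqP => // E.
    have := He (val j); rewrite E => H.
    have : l < D i0 by apply: leq_ltn_trans H _; rewrite prednK.
    by rewrite ltnNge Hl.
  rewrite addn0 (bigD1 i0) //=; congr (_ + _).
  exact: (big_sub [pred i | i != i0] (fun i => (D i == l : nat))).
have Hlt : Rlex (meas D1) mu.
  rewrite Emu /meas; split; first by rewrite !size_map.
  apply: (lex_desc (l := D i0)); first by rewrite Dl0 Dld.
    move=> l' /andP [H1 H2]; rewrite (Hcnt l' (ltnW H1)).
    by have -> : (D i0 == l') = false by apply/negbTE; rewrite neq_ltn H1.
  by rewrite (Hcnt _ (leqnn _)) eqxx.
have [L [D' [g' [H [Gam1 [HD' [HH [HR [Hg' HGam1]]]]]]]]] :=
  IH (meas D1) Hlt I1 D1 m1 G erefl HD1 HG1.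
pose Gam2 (z : {ffun I1 -> bool}) : {ffun I -> bool} :=
  [ffun i => if @insub _ _ I' i is Some i' then z (inl i') else
     G0 [ffun j => if @insub _ _ J' j is Some j' then z (inr j') else c j]
     (+) \big[addb/false]_(i' | lam i' && (i' != i0))
           (if @insub _ _ I' i' is Some i'' then z (inl i'') else false)].
have HGam2 : forall k (x : pt (m (g k))),
    Gam2 [ffun u => G k u x] = [ffun i => F (g k) i x].
  move=> k x; apply/ffunP => i; rewrite !ffunE.
  case: insubP => [i' _ Ei|Hi]; first by rewrite ffunE /= Ei.
  have Ei : i = i0 by apply/eqP; move: Hi; rewrite negbK.
  have [_ HdegQ _ Hlin Hc] := HQk k.
  have -> : [ffun j => if @insub _ _ J' j is Some j' then [ffun u => G k u x] (inr j') else c j]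
            = [ffun j => Qk k j x].
    apply/ffunP => j; rewrite !ffunE; case: insubP => [j' _ Ej|Hj].
      by rewrite ffunE /= Ej.
    rewrite /c Hc; symmetry; apply: deg0_const.
    by rewrite HdegQ; move: Hj; rewrite lt0n negbK => /eqP.
  rewrite Ei -Hlin /lincombI (bigD1 i0) //=.
  have -> : \big[addb/false]_(i' | lam i' && (i' != i0))
        (if @insub _ _ I' i' is Some i'' then [ffun u => G k u x] (inl i'') else false)
      = \big[addb/false]_(i' | lam i' && (i' != i0)) F (g k) i' x.
    apply: eq_bigr => i' /andP [_ Hne]; case: insubP => [i'' _ E|]; first by rewrite ffunE /= E.
    by rewrite Hne.
  by rewrite addbK.
exists L, D', (fun n => g (g' n)), H, (fun y => Gam2 (Gam1 y)).
split => //; split => //; split => //; split.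
  by move=> n; apply: (homo_ltn ltn_trans Hg); apply: Hg'.
by move=> n x; rewrite HGam1 HGam2.
Qed.
End Core.

Theorem lemmaA3 (d K : nat) (m : nat -> nat) (F : forall n, factor (m n) K) :
  0 < d -> factor_seq d F ->
  exists (L : nat) (g : nat -> nat) (H : forall n, factor (m (g n)) L)
         (Gamma : {ffun 'I_L -> bool} -> {ffun 'I_K -> bool}),
    factor_seq d H /\ fully_regular H /\
    (forall n, g n < g n.+1) /\
    (forall n (x : pt (m (g n))),
        Gamma [ffun j => H n j x] = [ffun i => F (g n) i x]).
Proof.
move=> d0 [M HM].
have Hinf : forall N, exists n, N <= n /\ exists t : {ffun 'I_K -> 'I_d.+1},
    t = [ffun i => inord (deg (F n i))].
  by move=> N; exists N; split => //; eexists.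
have [t Ht] := inf_pigeon Hinf.
have [g0 [Hg0 Hg0t]] := extract Ht.
pose D (i : 'I_K) : nat := t i.
have HF : forall n i, deg (F (g0 n) i) = D i.
  move=> n i; rewrite /D (Hg0t n) ffunE inordK // ltnS.
  by case: (HM (g0 n)) => H _; apply: H.
have HD : forall i, 0 < D i <= d.
  have [Hle [Hdim HK]] := HM (g0 0).
  have Hsum : \sum_i (0 < D i <= d : nat) = K.
    rewrite -(count_levels D d) [RHS]HK big_nat_cond [RHS]big_nat_cond.
    apply: eq_bigr => l /andP [Hl _].
    rewrite -card_set_sum -(Hdim l Hl) /dimv.
    by apply: eq_card => i; rewrite !inE HF.
  have Eset : [set i | 0 < D i <= d] = setT.
    apply/eqP; rewrite eqEcard subsetT cardsT card_ord card_set_sum Hsum.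
    by rewrite leqnn.
  move=> i; have : i \in [set i | 0 < D i <= d] by rewrite Eset inE.
  by rewrite inE.
have [L [D' [g' [H [Gam [HD' [HH [HR [Hg' HGam]]]]]]]]] :=
  core erefl HD HF.
exists L, (fun n => g0 (g' n)), H, Gam.
split.
  exists (fun l => #|[set j | D' j == l]|) => n; split; [|split].
  - by move=> j; rewrite HH; case/andP: (HD' j).
  - by move=> l _; rewrite /dimv; apply: eq_card => j; rewrite !inE HH.
  - have -> : \sum_(1 <= l < d.+1) #|[set j | D' j == l]| =
              \sum_(1 <= l < d.+1) \sum_j (D' j == l : nat).
      by apply: eq_bigr => l _; rewrite card_set_sum.
    rewrite count_levels (eq_bigr (fun _ => 1)); last by move=> j _; rewrite HD'.
    by rewrite sum1_card card_ord.
split; first exact: HR.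
split; first by move=> n; apply: (homo_ltn ltn_trans Hg0); apply: Hg'.
by move=> n x; rewrite HGam.
Qed.
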